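(* Let $G$ be a 2-arc-colored directed multigraph. If $C$ is a minimal PC Euler subgraph of $G$, then $C$ is a PC circuit.
   Context: $G$ has an arbitrary arc coloring $\phi:A(G)\to\{1,2\}$. Trails are directed walks without repeated arcs; a closed trail is properly colored (PC) if every two consecutive arcs, including the last and first arcs, have different colors. A (multi)digraph is PC Euler if it has a PC closed trail containing all of its arcs. A PC Euler subgraph of $G$ is a subgraph (with at least one arc) that is PC Euler; it is minimal if no proper subgraph of it is PC Euler. A PC circuit is a subgraph $C$ of $G$ that is PC Euler and satisfies $d^+_{1,C}(v)\le1$ and $d^+_{2,C}(v)\le 1$ for all $v\in V(C)$, where $d^+_{i,C}(v)$ is the number of arcs of color $i$ in $C$ leaving $v$. *)

(* Defs.v *)
From mathcomp Require Import all_boot.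
Set Implicit Arguments. Unset Strict Implicit. Unset Printing Implicit Defensive.

(* A 2-arc-coloured directed multigraph is given by a finite vertex type V,
   a finite arc type A (parallel arcs and loops allowed), tail/head maps
   tl hd : A -> V and a colouring col : A -> bool (false = colour 1,
   true = colour 2).  A subgraph is given by its arc set S : {set A}; its
   vertex set is the set of endpoints of its arcs. *)

Section PC.
Variables (V A : finType) (tl hd : A -> V) (col : A -> bool).

Definition pc_step (a b : A) : bool := (hd a == tl b) && (col a != col b).

Definition pc_closed_trail (s : seq A) : bool :=
  [&& s != [::], uniq s & cycle pc_step s].

Definition pc_euler (S : {set A}) : Prop :=
  exists s : seq A, pc_closed_trail s /\ [set a in s] = S.

Definition minimal_pc_euler (C : {set A}) : Prop :=
  pc_euler C /\ forall S : {set A}, S \proper C -> ~ pc_euler S.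

Definition out_deg_col (C : {set A}) (c : bool) (v : V) : nat :=
  #|[set a in C | (tl a == v) && (col a == c)]|.

Definition vert (C : {set A}) : {set V} := [set v | [exists a in C, (tl a == v) || (hd a == v)]].

Definition pc_circuit (C : {set A}) : Prop :=
  pc_euler C /\ forall v, v \in vert C -> forall c : bool, out_deg_col C c v <= 1.

End PC.

(* Main.v *)
Require Import Defs.
From mathcomp Require Import all_boot.

Lemma split_trail (V A : finType) (tl hd : A -> V) (col : A -> bool)
  (a b : A) (p q : seq A) :
  tl a = tl b -> col a = col b ->
  pc_closed_trail tl hd col (a :: p ++ b :: q) ->
  pc_closed_trail tl hd col (a :: p).
Proof.
move=> Htl Hcol /and3P [_ Hu Hc].
apply/and3P; split => //.
- move: Hu; rewrite -cat_cons cat_uniq; by case/and3P.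
- move: Hc; rewrite /cycle /= rcons_cat cat_path rcons_path => /andP [Hp Hr].
  move: Hr => /= /andP [Hb _].
  rewrite /cycle rcons_path Hp /=. move: Hb; rewrite /pc_step => /andP [/andP [/eqP H1 H2] _].
  by rewrite H1 -Htl eqxx Hcol H2.
Qed.

Theorem corollary1 (V A : finType) (tl hd : A -> V) (col : A -> bool)
  (C : {set A}) :
  minimal_pc_euler tl hd col C -> pc_circuit tl hd col C.
Proof.
move=> [[s [Hs Hset]] Hmin]; split; first by exists s.
move=> v _ c; rewrite leqNgt; apply/negP => /card_gt1P [a [b [Ha Hb Hab]]].
move: Ha Hb; rewrite !inE => /andP [aC /andP [/eqP ta /eqP ca]]
  /andP [bC /andP [/eqP tb /eqP cb]].
have as_ : a \in s by move: aC; rewrite -Hset inE.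
have bs : b \in s by move: bC; rewrite -Hset inE.
set s' := rot (index a s) s.
have Hs' : pc_closed_trail tl hd col s'.
  move: Hs => /and3P [H1 H2 H3]; apply/and3P; split.
  - by rewrite /s' rot_index.
  - by rewrite rot_uniq.
  - by rewrite rot_cycle.
have Hmem : s' =i s by apply: mem_rot.
move: Hs' Hmem; rewrite /s' rot_index //.
set t := (drop _ _ ++ _) => Hs' Hmem.
have bt : b \in t.
  move: bs; rewrite -Hmem inE => /orP [/eqP E|//].
  by move: Hab; rewrite E eqxx.
move: Hs' Hmem; case/splitPr: bt => p q Hs' Hmem.
have Hp := @split_trail _ _ tl hd col a b p q (etrans ta (esym tb)) (etrans ca (esym cb)) Hs'.
apply: (Hmin [set x in a :: p]); last by exists (a :: p).
apply/properP; split.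
- apply/subsetP => x; rewrite inE => xin; rewrite -Hset inE -Hmem.
  move: xin; rewrite !inE mem_cat => /orP [->//|->].
  by rewrite orbT.
- exists b => //; rewrite inE; apply/negP => bin.
  move: Hs' => /and3P [_ Hu _].
  move: Hu; rewrite -cat_cons cat_uniq => /and3P [_ /hasPn Hn _].
  by move: (Hn b); rewrite inE eqxx /= => /(_ isT); rewrite bin.
Qed.
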